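(* Let $\mathbf{L}'$ be an ortholattice with lattice reduct $\mathbf{L}$, and let $(P_{\mathbf{L}},E,\mathscr{T}_{\mathbf{L}},g)$ be its dual. Then for all $x\in P_{\mathbf{L}}$ and all $x,y\in P_{\mathbf{L}}$ the map $g$ satisfies: (M1) $g(g(x))=x$; (M2) $xE\subseteq yE\implies Eg(x)\subseteq Eg(y)$; (M3) $Ex\subseteq Ey\implies g(x)E\subseteq g(y)E$; (O) for every $x\in P_{\mathbf{L}}$ there exists $y\in P_{\mathbf{L}}$ with $yE\subseteq xE$ and $Ey\subseteq Eg(x)$.
   Context: An ortholattice is a bounded lattice $(L;\vee,\wedge,0,1)$ with an operation $'$ satisfying $a''=a$, $a\wedge a'=0$, $a\vee a'=1$ and the De Morgan laws. A partial homomorphism $\mathbf{L}\to\mathbf{2}$ is a partial map $f:L\to\{0,1\}$ whose domain is a $(0,1)$-sublattice and whose restriction is a $(0,1)$-homomorphism; an MPH is one with no proper extension; $P_{\mathbf{L}}$ is the set of MPHs. $(f,h)\in E$ iff $f(a)\le h(a)$ for all $a\in\mathrm{dom}f\cap\mathrm{dom}h$. $\mathscr{T}_{\mathbf{L}}$ has subbasis of closed sets $V_a=\{f: f(a)=0\}$, $W_a=\{f: f(a)=1\}$. The dual of $\mathbf{L}'$ is $(P_{\mathbf{L}},E,\mathscr{T}_{\mathbf{L}},g)$ where $g(f)(a)=0$ if $f(a')=1$, $g(f)(a)=1$ if $f(a')=0$, undefined otherwise (an MPH). For $x$: $xE=\{y:(x,y)\in E\}$, $Ex=\{y:(y,x)\in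 E\}$. *)

(* Defs.v *)
From mathcomp Require Import all_boot all_order.
Set Implicit Arguments. Unset Strict Implicit. Unset Printing Implicit Defensive.
Import Order.TTheory.
Local Open Scope order_scope.

Section Ortho.
Context {disp : Order.disp_t} {L : tbLatticeType disp}.

Definition orthocomplementation (c : L -> L) : Prop :=
  (forall a, c (c a) = a) /\
  (forall a, a `&` c a = \bot) /\
  (forall a, a `|` c a = \top) /\
  (forall a b, c (a `|` b) = c a `&` c b) /\
  (forall a b, c (a `&` b) = c a `|` c b).

(* a partial map L -> 2 (2 = bool, 0 = false, 1 = true); dom f = {a | f a <> None} *)
Definition pmapL := L -> option bool.

(* domain is a (0,1)-sublattice and the restriction is a (0,1)-homomorphism *)
Definition partial_hom (f : pmapL) : Prop :=
  f \bot = Some false /\ f \top = Some true /\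
  (forall a b u v, f a = Some u -> f b = Some v ->
     f (a `&` b) = Some (u && v) /\ f (a `|` b) = Some (u || v)).

Definition extends (f h : pmapL) : Prop := forall a u, f a = Some u -> h a = Some u.

Definition MPH (f : pmapL) : Prop :=
  partial_hom f /\ forall h, partial_hom h -> extends f h -> h = f.

Definition Erel (f h : pmapL) : Prop :=
  forall a u v, f a = Some u -> h a = Some v -> (u ==> v).

Definition gmap (c : L -> L) (f : pmapL) : pmapL :=
  fun a => match f (c a) with Some b => Some (~~ b) | None => None end.

End Ortho.

(* Main.v *)
Require Import Defs.
From mathcomp Require Import all_boot all_order.
From mathcomp Require Import boolp classical_sets.
Set Implicit Arguments. Unset Strict Implicit. Unset Printing Implicit Defensive.
Import Order.TTheory.
Local Open Scope order_scope.

Section S.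
Context (disp : Order.disp_t) (L : tbLatticeType disp) (c : L -> L)
  (Hc : orthocomplementation c).

Lemma ccE a : c (c a) = a. Proof. by case: Hc. Qed.
Lemma cmeetE a : a `&` c a = \bot. Proof. by case: Hc => _ []. Qed.
Lemma cJ a b : c (a `|` b) = c a `&` c b. Proof. by case: Hc => _ [_ [_ []]]. Qed.
Lemma cM a b : c (a `&` b) = c a `|` c b. Proof. by case: Hc => _ [_ [_ []]]. Qed.
Lemma ctop : c \top = \bot. Proof. by rewrite -(cmeetE \top) meet1x. Qed.
Lemma cbot : c \bot = \top. Proof. by rewrite -ctop ccE. Qed.

Lemma gmapE (f : @pmapL _ L) a u : gmap c f a = Some u <-> f (c a) = Some (~~ u).
Proof.
rewrite /gmap; case: (f (c a)) => [b|] //; split.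
- by case=> <-; rewrite negbK.
- by case=> ->; rewrite negbK.
Qed.

Lemma ggE (f : @pmapL _ L) : gmap c (gmap c f) = f.
Proof.
apply: funext => a; rewrite /gmap ccE; case: (f a) => // b; by rewrite negbK.
Qed.

Lemma g_ph f : partial_hom f -> partial_hom (gmap c f).
Proof.
move=> [f0 [f1 fM]]; split; [|split].
- by apply/gmapE; rewrite cbot.
- by apply/gmapE; rewrite ctop.
- move=> a b u v /gmapE Ha /gmapE Hb; have [H1 H2] := fM _ _ _ _ Ha Hb.
  split; apply/gmapE.
  + by rewrite cM negb_and.
  + by rewrite cJ negb_or.
Qed.

Lemma g_ext f h : extends f h -> extends (gmap c f) (gmap c h).
Proof. by move=> E a u /gmapE /E /gmapE. Qed.

Lemma g_MPH f : MPH f -> MPH (gmap c f).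
Proof.
move=> [fh fmax]; split; first exact: g_ph.
move=> h hh E; have E' := g_ext E; rewrite ggE in E'.
by rewrite -(fmax _ (g_ph hh) E') ggE.
Qed.

Lemma Erel_g1 (z x : @pmapL _ L) : Erel z (gmap c x) -> Erel x (gmap c z).
Proof.
move=> H a w v Hx /gmapE Hz.
have Hg : gmap c x (c a) = Some (~~ w) by apply/gmapE; rewrite ccE negbK.
by have := H _ _ _ Hz Hg; case: w v {Hx Hz Hg} => [] [].
Qed.

Lemma Erel_g2 (z x : @pmapL _ L) : Erel (gmap c x) z -> Erel (gmap c z) x.
Proof.
move=> H a v w /gmapE Hz Hx.
have Hg : gmap c x (c a) = Some (~~ w) by apply/gmapE; rewrite ccE negbK.
by have := H _ _ _ Hg Hz; case: w v {Hx Hz Hg} => [] [].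
Qed.

Lemma ext_MPH (y0 : @pmapL _ L) : partial_hom y0 ->
  exists y, MPH y /\ extends y0 y.
Proof.
move=> hy0.
pose T := {f : @pmapL _ L | partial_hom f /\ extends y0 f}.
pose t0 : T := exist _ y0 (conj hy0 (fun a u h => h)).
pose R := fun s t : T => `[< extends (sval s) (sval t) >].
have [t tmax] : exists t, premaximal R t.
  apply: (@ZL_preorder T t0 R).
  - by move=> t; apply/asboolP => a u.
  - by move=> r s t /asboolP E1 /asboolP E2; apply/asboolP => a u /E1 /E2.
  move=> A Atot.
  have [[s0 As0]|A0] := pselect (exists s, A s); last first.
    exists t0 => s As; by exfalso; apply: A0; exists s.
  pose h : @pmapL _ L := fun a =>
    if pselect (exists s, A s /\ sval s a = Some true) then Some true
    else if pselect (exists s, A s /\ sval s a = Some false) then Some false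
    else None.
  have hP a u : h a = Some u <-> exists s, A s /\ sval s a = Some u.
    rewrite /h; case: pselect => [[s [As Hs]]|N1].
      split; first by case=> <-; exists s.
      case=> s' [As' Hs']; congr Some.
      have [/asboolP E|/asboolP E] := Atot _ _ As As'.
        by move: (E _ _ Hs); rewrite Hs' => -[].
      by move: (E _ _ Hs'); rewrite Hs => -[].
    case: pselect => [[s [As Hs]]|N2].
      split; first by case=> <-; exists s.
      case=> s' [As' Hs']; case: u Hs' => // Hs'; exfalso; apply: N1; by exists s'.
    split=> //; case=> s' [As' Hs']; case: u Hs' => Hs'.
      by exfalso; apply: N1; exists s'.
    by exfalso; apply: N2; exists s'.
  have hph : partial_hom h.
    have [[p0 [p1 pM]] _] := svalP s0.
    split; [|split].
    - by apply/hP; exists s0.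
    - by apply/hP; exists s0.
    move=> a b u v /hP [s1 [As1 H1]] /hP [s2 [As2 H2]].
    have [/asboolP E|/asboolP E] := Atot _ _ As1 As2.
      have [q _] := svalP s2.
      have [M1 M2] := q.2.2 _ _ _ _ (E _ _ H1) H2.
      by split; apply/hP; exists s2.
    have [q _] := svalP s1.
    have [M1 M2] := q.2.2 _ _ _ _ H1 (E _ _ H2).
    by split; apply/hP; exists s1.
  have hext : extends y0 h.
    by move=> a u /(proj2 (svalP s0)) H; apply/hP; exists s0.
  exists (exist _ h (conj hph hext)) => s As; apply/asboolP => a u Hs.
  by apply/hP; exists s.
exists (sval t); split; last exact: (proj2 (svalP t)).
split; first exact: (proj1 (svalP t)).
move=> h hh E.
have hext : extends y0 h by move=> a u /(proj2 (svalP t)) /E.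
have /tmax /asboolP E2 : R t (exist _ h (conj hh hext)) by apply/asboolP.
apply: funext => a /=; case Ha: (h a) => [u|].
  by rewrite (E2 _ _ Ha).
by case Ht: (sval t a) => [u|] //; rewrite (E _ _ Ht) in Ha.
Qed.

Lemma O_prop (x : @pmapL _ L) : MPH x ->
  exists y, MPH y /\
    (forall z, MPH z -> Erel y z -> Erel x z) /\
    (forall z, MPH z -> Erel z y -> Erel z (gmap c x)).
Proof.
move=> [[x0 [x1 xM]] _].
pose U b := exists d, x d = Some true /\ d <= b.
have Umono a b : U a -> a <= b -> U b.
  by move=> [d [Hd Hda]] ab; exists d; split=> //; exact: le_trans ab.
have Umeet a b : U a -> U b -> U (a `&` b).
  move=> [d1 [H1 L1]] [d2 [H2 L2]]; exists (d1 `&` d2); split.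
    by have [-> _] := xM _ _ _ _ H1 H2.
  exact: leI2.
have Uex z : U z -> U (c z) -> False.
  move=> Uz Ucz; have [d [Hd Ld]] := Umeet _ _ Uz Ucz.
  rewrite cmeetE lex0 in Ld; move/eqP: Ld Hd => ->; by rewrite x0.
pose y0 : @pmapL _ L := fun b =>
  if pselect (U b) then Some true else if pselect (U (c b)) then Some false
  else None.
have y0T b : y0 b = Some true <-> U b.
  rewrite /y0; case: pselect => // nU; split=> //.
  by case: pselect.
have y0F b : y0 b = Some false <-> U (c b).
  rewrite /y0; case: pselect => [Ub|nU].
    by split=> // Ucb; exfalso; exact: Uex Ub Ucb.
  by case: pselect.
have hy0 : partial_hom y0.
  split; [|split].
  - apply/y0F; rewrite cbot; exists \top; split; [exact: x1|exact: lexx].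
  - apply/y0T; exists \top; split; [exact: x1|exact: lexx].
  move=> a b [] [] /=.
  + move=> /y0T Ua /y0T Ub; split; apply/y0T; first exact: Umeet.
    exact: Umono Ua (leUl _ _).
  + move=> /y0T Ua /y0F Ub; split.
      by apply/y0F; rewrite cM; apply: Umono Ub (leUr _ _).
    by apply/y0T; apply: Umono Ua (leUl _ _).
  + move=> /y0F Ua /y0T Ub; split.
      by apply/y0F; rewrite cM; apply: Umono Ua (leUl _ _).
    by apply/y0T; apply: Umono Ub (leUr _ _).
  + move=> /y0F Ua /y0F Ub; split.
      by apply/y0F; rewrite cM; apply: Umono Ua (leUl _ _).
    by apply/y0F; rewrite cJ; apply: Umeet.
have [y [My Ey]] := ext_MPH hy0.
exists y; split=> //; split.
- move=> z _ H a u v Hx Hz; case: u Hx => // Hx.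
  have : y0 a = Some true by apply/y0T; exists a; split=> //; exact: lexx.
  by move/Ey => Hy; exact: H _ _ _ Hy Hz.
- move=> z _ H a u w Hz /gmapE Hg; case: w Hg => Hg; first by rewrite implybT.
  have : y0 a = Some false by apply/y0F; exists (c a); split=> //; exact: lexx.
  by move/Ey => Hy; have := H _ _ _ Hz Hy; case: u {Hz}.
Qed.

End S.

Theorem theorem4p5 (disp : Order.disp_t) (L : tbLatticeType disp) (c : L -> L)
  (Hc : orthocomplementation c) :
  (* (M1) *)
  (forall x : @pmapL _ L, MPH x -> gmap c (gmap c x) = x) /\
  (* (M2) xE ⊆ yE -> E g(x) ⊆ E g(y) *)
  (forall x y : @pmapL _ L, MPH x -> MPH y ->
     (forall z, MPH z -> Erel x z -> Erel y z) ->
     (forall z, MPH z -> Erel z (gmap c x) -> Erel z (gmap c y))) /\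
  (* (M3) Ex ⊆ Ey -> g(x)E ⊆ g(y)E *)
  (forall x y : @pmapL _ L, MPH x -> MPH y ->
     (forall z, MPH z -> Erel z x -> Erel z y) ->
     (forall z, MPH z -> Erel (gmap c x) z -> Erel (gmap c y) z)) /\
  (* (O) *)
  (forall x : @pmapL _ L, MPH x ->
     exists y, MPH y /\
       (forall z, MPH z -> Erel y z -> Erel x z) /\
       (forall z, MPH z -> Erel z y -> Erel z (gmap c x))).
Proof.
split; [|split; [|split]].
- by move=> x _; exact: (ggE Hc).
- move=> x y _ _ H z Mz /(Erel_g1 Hc) Hx.
  apply: (Erel_g1 Hc); exact: H _ (g_MPH Hc Mz) Hx.
- move=> x y _ _ H z Mz /(Erel_g2 Hc) Hx.
  apply: (Erel_g2 Hc); exact: H _ (g_MPH Hc Mz) Hx.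
- move=> x Mx; exact: (O_prop Hc).
Qed.
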